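(* Let $p,q\ge0$, $m=p+q$, and let $\boldsymbol x=(x_1,\dots,x_m)$, $\boldsymbol a=(a_1,\dots,a_m)$ be indeterminates. Then $$F^{p,q}(\boldsymbol x;\boldsymbol a)=(-1)^{\binom p2+\binom q2}\prod_{i=1}^m x_i^{p-1}\cdot\det V^{p,q}(\boldsymbol x+\boldsymbol x^{-1};\boldsymbol a\boldsymbol x^{q-p})=(-1)^{\binom p2+\binom q2}\det U,$$ where $\boldsymbol x+\boldsymbol x^{-1}=(x_1+x_1^{-1},\dots,x_m+x_m^{-1})$, $\boldsymbol a\boldsymbol x^{q-p}=(a_1x_1^{q-p},\dots,a_mx_m^{q-p})$, and $U$ is the $m\times m$ matrix whose $i$-th row is $$\big(x_i^{p-1},\,x_i^{p-2}(1+x_i^2),\,\dots,\,(1+x_i^2)^{p-1},\ a_ix_i^{q-1},\,a_ix_i^{q-2}(1+x_i^2),\,\dots,\,a_i(1+x_i^2)^{q-1}\big).$$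
   Context: Partitions: a partition $\lambda=(\lambda_1\ge\lambda_2\ge\cdots)$ of nonnegative integers with finitely many nonzero parts; $l(\lambda)$ is the number of nonzero parts, $|\lambda|=\sum_i\lambda_i$. In Frobenius notation $\lambda=(\alpha_1,\dots,\alpha_d\,|\,\beta_1,\dots,\beta_d)$ where $d=\#\{i:\lambda_i\ge i\}$, $\alpha_i=\lambda_i-i$, $\beta_i=\lambda'_i-i$ ($\lambda'$ the conjugate partition). For an integer $m\ge 0$, $\mathcal{P}_m$ is the set of partitions $\lambda$ with $l(\lambda)\le m$ of the form $(\alpha_1,\dots,\alpha_d\,|\,\alpha_1+1,\dots,\alpha_d+1)$ (the empty partition included; $|\lambda|$ is then even). For nonnegative integers $p,q$, vectors $\boldsymbol{x}=(x_1,\dots,x_{p+q})$, $\boldsymbol{a}=(a_1,\dots,a_{p+q})$, and partitions $\lambda,\mu$ with $l(\lambda)\le p$, $l(\mu)\le q$, let $V^{p,q}_{\lambda,\mu}(\boldsymbol{x};\boldsymbol{a})$ be the $(p+q)\times(p+q)$ matrix whose $i$-th row is $$(x_i^{\lambda_p},x_i^{\lambda_{p-1}+1},\dots,x_i^{\lambda_1+p-1},\ a_ix_i^{\mu_q},a_ix_i^{\mu_{q-1}+1},\dots,a_ix_i^{\mu_1+q-1}),$$ and $V^{p,q}(\boldsymbol x;\boldsymbol a)=V^{p,q}_{\emptyset,\emptyset}(\boldsymbol x;\boldsymbol a)$, i.e. the matrix with $i$-th row $(1,x_i,\dots,x_i^{p-1},a_i,a_ix_i,\dots,a_ix_i^{q-1})$.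 Define $$F^{p,q}(\boldsymbol{x};\boldsymbol{a})=\sum_{\lambda\in\mathcal{P}_p,\ \mu\in\mathcal{P}_q}(-1)^{(|\lambda|+|\mu|)/2}\det V^{p,q}_{\lambda,\mu}(\boldsymbol{x};\boldsymbol{a}).$$ *)

(* Defs.v *)
From HB Require Import structures.
From mathcomp Require Import all_boot all_order all_algebra.
Set Implicit Arguments. Unset Strict Implicit. Unset Printing Implicit Defensive.
Import Order.TTheory GRing.Theory Num.Theory.

(* A partition lambda with l(lambda) <= p is represented by the function
   lam : 'I_p -> nat, lam i = lambda_{i+1} (0-based index). *)

Definition conjp (p : nat) (lam : 'I_p -> nat) (j : nat) : nat :=
  #|[pred i : 'I_p | j <= lam i]|.

Definition is_partition (p : nat) (lam : 'I_p -> nat) : bool :=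
  [forall i : 'I_p, forall j : 'I_p, (i <= j) ==> (lam j <= lam i)].

(* Frobenius form (alpha | alpha + 1): for every 1-based index k with
   lambda_k >= k (i.e. k <= d), beta_k = alpha_k + 1, i.e.
   lambda'_k - k = lambda_k - k + 1, i.e. lambda'_k = lambda_k + 1. *)
Definition frob_shift (p : nat) (lam : 'I_p -> nat) : bool :=
  [forall i : 'I_p, (i.+1 <= lam i) ==> (conjp lam i.+1 == (lam i).+1)].

Definition inP (p : nat) (lam : 'I_p -> nat) : bool :=
  is_partition lam && frob_shift lam.

Definition psize (p : nat) (lam : 'I_p -> nat) : nat := \sum_(i < p) lam i.

(* Every lambda in P_p has all parts < p, so P_p is exactly the set of
   {ffun 'I_p -> 'I_p} satisfying inP (used to make the sum finite). *)
Lemma inP_parts_lt (p : nat) (lam : 'I_p -> nat) :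
  inP lam -> forall i : 'I_p, lam i < p.
Proof.
case/andP=> /forallP Hpart /forallP Hfrob i.
have i0 : 0 < p by case: i => [k Hk]; apply: leq_ltn_trans Hk.
set o := Ordinal i0.
have Hle : lam i <= lam o by have := Hpart o => /forallP /(_ i) /implyP; apply.
case: (posnP (lam o)) => [Ho|Hpos].
  by move: Hle; rewrite Ho leqn0 => /eqP ->.
have := Hfrob o => /implyP /(_ Hpos) /eqP Hc.
apply: (leq_ltn_trans Hle).
by rewrite -ltnS -Hc /conjp ltnS; apply: leq_trans (max_card _) _; rewrite card_ord.
Qed.

Local Open Scope ring_scope.

Definition Vmat (R : comRingType) (p q : nat) (lam : 'I_p -> nat) (mu : 'I_q -> nat)
  (x a : 'I_(p + q) -> R) : 'M[R]_(p + q) :=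
  \matrix_(i, j) match split j with
                 | inl j' => x i ^+ (lam (rev_ord j') + j')
                 | inr k => a i * x i ^+ (mu (rev_ord k) + k)
                 end.

Definition V0 (R : comRingType) (p q : nat) (x a : 'I_(p + q) -> R) : 'M[R]_(p + q) :=
  Vmat (fun _ : 'I_p => 0%N) (fun _ : 'I_q => 0%N) x a.

Definition Ffun (R : comRingType) (p q : nat) (x a : 'I_(p + q) -> R) : R :=
  \sum_(lam : {ffun 'I_p -> 'I_p} | inP (fun i => nat_of_ord (lam i)))
   \sum_(mu : {ffun 'I_q -> 'I_q} | inP (fun i => nat_of_ord (mu i)))
     (-1) ^+ ((psize (fun i => nat_of_ord (lam i)) + psize (fun i => nat_of_ord (mu i)))./2)
     * \det (Vmat (fun i => nat_of_ord (lam i)) (fun i => nat_of_ord (mu i)) x a).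

Definition Umat (R : comRingType) (p q : nat) (x a : 'I_(p + q) -> R) : 'M[R]_(p + q) :=
  \matrix_(i, j) match split j with
                 | inl j' => x i ^+ (p - 1 - j') * (1 + x i ^+ 2) ^+ j'
                 | inr k => a i * x i ^+ (q - 1 - k) * (1 + x i ^+ 2) ^+ k
                 end.

(* Main.v *)
Require Import Defs.
From mathcomp Require Import all_boot all_order all_algebra.
Import GRing.Theory Num.Theory.
From Stdlib Require Import FunctionalExtensionality.
From mathcomp Require Import zify ring.
Set Implicit Arguments. Unset Strict Implicit. Unset Printing Implicit Defensive.


Lemma conjpE n (lam : 'I_n -> nat) j : conjp lam j = \sum_(i < n) (j <= lam i).
Proof.
rewrite /conjp -sum1_card big_mkcond /=; apply: eq_bigr => i _.
by rewrite inE; case: leqP.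
Qed.

Lemma partP n (lam : 'I_n -> nat) :
  reflect (forall i j : 'I_n, i <= j -> lam j <= lam i) (is_partition lam).
Proof.
apply: (iffP forallP) => [H i j ij|H i]; first by have /forallP/(_ j)/implyP := H i; apply.
by apply/forallP => j; apply/implyP; apply: H.
Qed.

Lemma frobP n (lam : 'I_n -> nat) :
  reflect (forall i : 'I_n, i.+1 <= lam i -> conjp lam i.+1 = (lam i).+1) (frob_shift lam).
Proof.
apply: (iffP forallP) => [H i c|H i]; first by have /implyP/(_ c)/eqP := H i.
by apply/implyP => c; apply/eqP; apply: H.
Qed.

Definition padf p (m : 'I_p.+1 -> nat) : 'I_p.+2 -> nat :=
  fun i => if i < p.+1 then m (inord i) else 0.
Definition hookf p (m : 'I_p.+1 -> nat) : 'I_p.+2 -> nat :=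
  fun i => if (i : nat) == 0 then p.+1 else (m (inord i.-1)).+1.

Lemma padf_w p (m : 'I_p.+1 -> nat) (i : 'I_p.+1) :
  padf m (widen_ord (leqnSn _) i) = m i.
Proof. by rewrite /padf /= ltn_ord inord_val. Qed.

Lemma padf_max p (m : 'I_p.+1 -> nat) : padf m ord_max = 0.
Proof. by rewrite /padf /= ltnn. Qed.

Lemma hookf0 p (m : 'I_p.+1 -> nat) : hookf m ord0 = p.+1.
Proof. by []. Qed.

Lemma hookf_l p (m : 'I_p.+1 -> nat) (i : 'I_p.+1) : hookf m (lift ord0 i) = (m i).+1.
Proof. by rewrite /hookf /= inord_val. Qed.

Lemma conjp_pad p (m : 'I_p.+1 -> nat) j : 0 < j -> conjp (padf m) j = conjp m j.
Proof.
move=> j0; rewrite !conjpE big_ord_recr /= padf_max.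
rewrite (_ : (j <= 0) = false) ?addn0; last by case: j j0.
by apply: eq_bigr => i _; rewrite padf_w.
Qed.

Lemma conjp_hook p (m : 'I_p.+1 -> nat) j :
  conjp (hookf m) j.+1 = (j < p.+1) + conjp m j.
Proof.
rewrite !conjpE big_ord_recl hookf0 ltnS; congr (_ + _).
by apply: eq_bigr => i _; rewrite hookf_l.
Qed.

Lemma conjp0 n (m : 'I_n -> nat) : conjp m 0 = n.
Proof. by rewrite conjpE (eq_bigr (fun _ => 1)) // sum1_card card_ord. Qed.

Lemma inP_pad p (m : 'I_p.+1 -> nat) : inP (padf m) = inP m.
Proof.
apply/idP/idP => /andP [/partP P /frobP F]; apply/andP; split.
- apply/partP => i j ij.
  have := P (widen_ord (leqnSn _) i) (widen_ord (leqnSn _) j).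
  by rewrite !padf_w; apply.
- apply/frobP => i c.
  have := F (widen_ord (leqnSn _) i); rewrite padf_w conjp_pad //; apply; exact: c.
- apply/partP => i j ij; rewrite /padf.
  case: (ltnP j p.+1) => jp; last by [].
  rewrite (leq_ltn_trans ij jp); apply: P; rewrite !inordK //; exact: leq_ltn_trans ij jp.
- apply/frobP => i; rewrite /padf; case: (ltnP i p.+1) => ip // c.
  rewrite conjp_pad //; have := F (inord i); rewrite inordK //; exact.
Qed.
Lemma inP_hook p (m : 'I_p.+1 -> nat) : inP (hookf m) = inP m.
Proof.
apply/idP/idP.
  move=> /andP [/partP P /frobP F]; apply/andP; split.
    apply/partP => i j ij; have := P (lift ord0 i) (lift ord0 j); rewrite !hookf_l ltnS; apply; by rewrite /= /bump /= !add1n.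
  apply/frobP => i c.
  have := F (lift ord0 i); rewrite hookf_l /= /bump /= add1n ltnS => /(_ c).
  rewrite conjp_hook.
  have : hookf m (lift ord0 i) <= hookf m ord0 by apply: P.
  rewrite hookf_l hookf0 ltnS => mp.
  have -> : i.+1 < p.+1 by rewrite ltnS; exact: leq_trans c mp.
  by rewrite add1n => -[].
move=> Hm; have Hlt := inP_parts_lt Hm; move: Hm => /andP [/partP P /frobP F].
apply/andP; split.
  apply/partP => i j ij; rewrite /hookf.
  case: (eqVneq (j : nat) 0) => [j0|j0].
    by rewrite (_ : (i : nat) == 0) //; move: ij; rewrite j0 leqn0.
  case: (eqVneq (i : nat) 0) => [i0|i0]; first by rewrite ltnS; exact: Hlt.
  have ilt : i.-1 < p.+1 by have := ltn_ord i; lia.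
  have jlt : j.-1 < p.+1 by have := ltn_ord j; lia.
  rewrite ltnS; apply: P; rewrite !inordK //; lia.
apply/frobP => i; rewrite /hookf.
case: (eqVneq (i : nat) 0) => [i0|i0].
  by move=> _; rewrite i0 conjp_hook conjp0 ltnS leq0n.
move=> c; have Ei : i = (i.-1).+1 :> nat by lia.
rewrite Ei conjp_hook ltnS in c *.
have := F (inord i.-1); rewrite inordK; last by have := ltn_ord i; lia.
move=> /(_ c) ->; have := Hlt (inord i.-1).
by rewrite /= => h; rewrite (_ : i.-1.+1 < p.+1) //; move: c h; rewrite /=; lia.
Qed.


Lemma sum_bool_full n (b : 'I_n -> bool) :
  \sum_(i < n) (b i : nat) = n -> forall i, b i.
Proof.
move=> H i; apply/negPn/negP => bi.
move: H; rewrite (bigD1 i) //= (negPf bi) add0n.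
have : \sum_(j < n | j != i) (b j : nat) <= \sum_(j < n | j != i) 1.
  by apply: leq_sum => j _; case: (b j).
rewrite sum1dep_card (_ : #|[set x | x != i]| = n.-1); last by rewrite cardsE cardC1 card_ord.
move=> h1 h2.
by move: h1; rewrite h2; case: n {b bi h2} i => [[]|n] //; rewrite ltnn.
Qed.

Lemma conjp1_full n (g : 'I_n -> nat) : conjp g 1 = n -> forall i, 0 < g i.
Proof. by rewrite conjpE => H; apply: sum_bool_full. Qed.

Lemma unpad p (g : 'I_p.+2 -> nat) : inP g -> g ord0 <= p ->
  g = padf (fun i => g (widen_ord (leqnSn _) i)).
Proof.
move=> Hg g0; have Hp := Hg; move: Hp => /andP [/partP P /frobP F].
have gmax : g ord_max = 0.
  apply/eqP; rewrite -leqn0 leqNgt; apply/negP => gpos.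
  have gall : forall i, 0 < g i by move=> i; apply: leq_trans gpos _; apply: P; exact: leq_ord.
  have := F ord0 (gall ord0); rewrite /= (_ : conjp g 1 = p.+2).
    by case=> E; move: g0; rewrite -E ltnn.
  by rewrite conjpE (eq_bigr (fun _ => 1)) ?sum1_card ?card_ord // => i _; rewrite gall.
apply: functional_extensionality => i; rewrite /padf.
case: (ltnP i p.+1) => ip.
  by congr g; apply: val_inj; rewrite /= inordK.
have -> : i = ord_max by apply: val_inj; have := ltn_ord i; rewrite /=; lia.
by [].
Qed.

Lemma unhook p (g : 'I_p.+2 -> nat) : inP g -> g ord0 = p.+1 ->
  g = hookf (fun i => (g (lift ord0 i)).-1).
Proof.
move=> Hg g0; have Hp := Hg; move: Hp => /andP [/partP P /frobP F].
have gall : forall i, 0 < g i.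
  apply: conjp1_full; have := F ord0; rewrite g0 /=; by move=> /(_ isT) ->.
apply: functional_extensionality => i; rewrite /hookf.
case: (eqVneq (i : nat) 0) => [i0|i0].
  by rewrite -g0; congr g; apply: val_inj.
have -> : lift ord0 (inord i.-1 : 'I_p.+1) = i.
  apply: val_inj; rewrite /= /bump /= inordK; first by lia.
  by have := ltn_ord i; lia.
by rewrite prednK.
Qed.

Lemma psize_pad p (m : 'I_p.+1 -> nat) : psize (padf m) = psize m.
Proof.
rewrite /psize big_ord_recr /= padf_max addn0; apply: eq_bigr => i _; exact: padf_w.
Qed.

Lemma psize_hook p (m : 'I_p.+1 -> nat) : psize (hookf m) = psize m + p.+1.*2.
Proof.
rewrite /psize big_ord_recl hookf0.
rewrite (eq_bigr (fun i => (m i).+1)); last by move=> i _; rewrite hookf_l.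
rewrite (eq_bigr (fun i => m i + 1)); last by move=> i _; rewrite addn1.
rewrite big_split /= sum1_card card_ord; lia.
Qed.

Lemma inP_even p (lam : 'I_p -> nat) : inP lam -> ~~ odd (psize lam).
Proof.
case: p lam => [|p] lam H; first by rewrite /psize big_ord0.
elim: p lam H => [|p IH] lam H.
  by rewrite /psize big_ord1; have := inP_parts_lt H ord0; case: (lam ord0).
have := inP_parts_lt H ord0; rewrite ltnS leq_eqVlt => /orP [/eqP E|lt].
  rewrite (unhook H E) psize_hook oddD odd_double addbF; apply: IH.
  by rewrite -inP_hook -(unhook H E).
rewrite (unpad H lt) psize_pad; apply: IH.
by rewrite -inP_pad -(unpad H lt).
Qed.

Definition fv n (lam : {ffun 'I_n -> 'I_n}) : 'I_n -> nat := fun i => lam i.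

Definition padF p (mu : {ffun 'I_p.+1 -> 'I_p.+1}) : {ffun 'I_p.+2 -> 'I_p.+2} :=
  [ffun i => inord (padf (fv mu) i)].
Definition unpadF p (lam : {ffun 'I_p.+2 -> 'I_p.+2}) : {ffun 'I_p.+1 -> 'I_p.+1} :=
  [ffun i => inord (lam (widen_ord (leqnSn _) i))].
Definition hookF p (mu : {ffun 'I_p.+1 -> 'I_p.+1}) : {ffun 'I_p.+2 -> 'I_p.+2} :=
  [ffun i => inord (hookf (fv mu) i)].
Definition unhookF p (lam : {ffun 'I_p.+2 -> 'I_p.+2}) : {ffun 'I_p.+1 -> 'I_p.+1} :=
  [ffun i => inord (lam (lift ord0 i)).-1].

Lemma fv_padF p (mu : {ffun 'I_p.+1 -> 'I_p.+1}) : fv (padF mu) = padf (fv mu).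
Proof.
apply: functional_extensionality => i; rewrite /fv ffunE inordK // /padf.
by case: ifP => // _; apply: leq_trans (ltn_ord _) _.
Qed.

Lemma fv_hookF p (mu : {ffun 'I_p.+1 -> 'I_p.+1}) : fv (hookF mu) = hookf (fv mu).
Proof.
apply: functional_extensionality => i; rewrite /fv ffunE inordK // /hookf.
by case: ifP => // _; rewrite ltnS; apply: leq_trans (ltn_ord _) _.
Qed.

Lemma fv_unpadF p (lam : {ffun 'I_p.+2 -> 'I_p.+2}) : inP (fv lam) ->
  (fv lam ord0 <= p)%N -> fv (unpadF lam) = fun i => fv lam (widen_ord (leqnSn _) i).
Proof.
move=> H l0; apply: functional_extensionality => i; rewrite /fv ffunE inordK //.
have /partP P := (andP H).1.
apply: leq_ltn_trans (P ord0 _ (leq0n _)) _; exact: l0.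
Qed.

Lemma fv_unhookF p (lam : {ffun 'I_p.+2 -> 'I_p.+2}) :
  fv (unhookF lam) = fun i => (fv lam (lift ord0 i)).-1.
Proof.
apply: functional_extensionality => i; rewrite /fv ffunE inordK //.
have := ltn_ord (lam (lift ord0 i)); lia.
Qed.

Lemma fv_inj n : injective (@fv n).
Proof.
move=> a b E; apply/ffunP => i; apply: val_inj.
by have := congr1 (fun f => f i) E.
Qed.

Section Split.
Variable R : nmodType.
Local Open Scope ring_scope.

Lemma split_sum p (G : {ffun 'I_p.+2 -> 'I_p.+2} -> R) :
  \sum_(lam | inP (fv lam)) G lam =
  \sum_(mu | inP (fv mu)) G (padF mu) + \sum_(mu | inP (fv mu)) G (hookF mu).
Proof.
rewrite (bigID (fun lam => (fv lam ord0 == p.+1))) /= addrC; congr (_ + _).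
  rewrite (reindex_onto (@padF p) (@unpadF p)) => [|lam /andP [H E]].
    apply: eq_bigl => mu; rewrite fv_padF inP_pad.
    have -> : unpadF (padF mu) = mu.
      apply: fv_inj; rewrite /fv; apply: functional_extensionality => i.
      have E : (padF mu (widen_ord (leqnSn _) i) : nat) = mu i.
        by have := congr1 (fun f => f (widen_ord (leqnSn _) i)) (fv_padF mu); rewrite padf_w.
      by rewrite [unpadF _ _]ffunE E inordK.
    rewrite eqxx andbT; case: (inP (fv mu)) => //=.
    rewrite /padf /= /fv; apply/eqP => E.
    by have := ltn_ord (mu (inord 0)); rewrite E ltnn.
  have l0 : (fv lam ord0 <= p)%N.
    have := ltn_ord (lam ord0); rewrite ltnS leq_eqVlt => /orP [/eqP E'|//].
    by rewrite /fv E' eqxx in E.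
  apply: fv_inj; rewrite fv_padF fv_unpadF //; exact/esym/unpad.
rewrite (reindex_onto (@hookF p) (@unhookF p)) => [|lam /andP [H /eqP E]].
  apply: eq_bigl => mu; rewrite fv_hookF inP_hook.
  have -> : unhookF (hookF mu) = mu.
    apply: fv_inj; rewrite fv_unhookF fv_hookF; apply: functional_extensionality => i.
    by rewrite hookf_l.
  by rewrite hookf0 !eqxx !andbT.
apply: fv_inj; rewrite fv_hookF fv_unhookF; exact/esym/unhook.
Qed.

End Split.

Local Open Scope ring_scope.

Section Abs.
Variable R : comRingType.

Definition upd T n (f : 'I_n -> T) (k : 'I_n) (v : T) : 'I_n -> T :=
  fun j => if j == k then v else f j.

Definition good n (Phi : ('I_n -> R -> R) -> R) : Prop :=
  (forall f k c (v w : R -> R), Phi (upd f k (fun y => c * v y + w y))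
       = c * Phi (upd f k v) + Phi (upd f k w)) /\
  (forall f i j, i != j -> f i = f j -> Phi f = 0).

Lemma upd_same T n (f : 'I_n -> T) k v w : upd (upd f k v) k w = upd f k w.
Proof. by apply: functional_extensionality => j; rewrite /upd; case: eqP. Qed.

Lemma upd_comm T n (f : 'I_n -> T) i j v w : i != j ->
  upd (upd f i v) j w = upd (upd f j w) i v.
Proof.
move=> ij; apply: functional_extensionality => k; rewrite /upd.
case: (eqVneq k j) => [->|kj] //.
by rewrite eq_sym (negPf ij).
Qed.

Lemma upd_id T n (f : 'I_n -> T) k : upd f k (f k) = f.
Proof. by apply: functional_extensionality => j; rewrite /upd; case: eqP => // ->. Qed.

Lemma upd_eq T n (f : 'I_n -> T) k v : upd f k v k = v.
Proof. by rewrite /upd eqxx. Qed.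

Lemma upd_neq T n (f : 'I_n -> T) k v j : j != k -> upd f k v j = f j.
Proof. by rewrite /upd => /negPf ->. Qed.

Lemma good_add n Phi (f : 'I_n -> R -> R) k v w : good Phi ->
  Phi (upd f k (fun y => v y + w y)) = Phi (upd f k v) + Phi (upd f k w).
Proof.
case=> L _; rewrite -[Phi (upd f k v)]mul1r -L; congr (Phi (upd _ _ _)); apply: functional_extensionality => y.
by rewrite mul1r.
Qed.

Lemma good_swap n Phi (f : 'I_n -> R -> R) i j : good Phi -> i != j ->
  Phi (upd (upd f i (f j)) j (f i)) = - Phi f.
Proof.
move=> G ij; have [L A] := G.
pose F u v := Phi (upd (upd f i u) j v).
have F0 u : F u u = 0.
  apply: (A _ i j ij); rewrite upd_eq upd_neq ?upd_eq //.
have FL u v w : F (fun y => v y + w y) u = F v u + F w u.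
  by rewrite /F !(upd_comm _ _ _ ij) good_add.
have FR u v w : F u (fun y => v y + w y) = F u v + F u w.
  by rewrite /F good_add.
have := F0 (fun y => f i y + f j y).
rewrite FL !FR !F0 add0r addr0 => /eqP; rewrite addr_eq0 => /eqP.
move=> E; rewrite -/(F (f j) (f i)) -[F (f j) (f i)]opprK -E /F.
by rewrite upd_id upd_id.
Qed.


Definition ins T n (k : 'I_n.+1) (v : T) (h : 'I_n -> T) : 'I_n.+1 -> T :=
  fun j => match unlift k j with Some j' => h j' | None => v end.

Lemma ins_k T n (k : 'I_n.+1) (v : T) h : ins k v h k = v.
Proof. by rewrite /ins unlift_none. Qed.

Lemma ins_lift T n (k : 'I_n.+1) (v : T) h j : ins k v h (lift k j) = h j.
Proof. by rewrite /ins liftK. Qed.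

Lemma ins_upd T n (k : 'I_n.+1) (v w : T) h : ins k v h = upd (ins k w h) k v.
Proof.
apply: functional_extensionality => j; rewrite /upd.
case: (unliftP k j) => [j'|] ->; last by rewrite eqxx ins_k.
by rewrite eq_sym (negPf (neq_lift _ _)) !ins_lift.
Qed.

Lemma lift_valE n (h : 'I_n) (i : 'I_n.-1) : val (lift h i) = bump h i.
Proof. by []. Qed.

Lemma ins_swap T n (k : 'I_n) (v : T) h :
  ins (lift ord0 k) v h =
  upd (upd (ins (lift ord_max k) v h) (lift ord_max k) (h k)) (lift ord0 k) v.
Proof.
have va : val (lift (@ord_max n) k) = k by rewrite lift_valE /bump leqNgt ltn_ord.
have vb : val (lift (@ord0 n) k) = k.+1 by [].
move: (lift ord_max k) (lift ord0 k) va vb => a b va vb.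
apply: functional_extensionality => j; rewrite /upd.
case: (eqVneq j b) => [->|jb]; first by rewrite ins_k.
case: (eqVneq j a) => [->|ja].
  have -> : a = lift b k by apply: val_inj; rewrite lift_valE va vb /bump ltnn.
  by rewrite ins_lift.
rewrite /ins.
case: (unliftP b j) => [j1|] E1; last by rewrite E1 eqxx in jb.
case: (unliftP a j) => [j2|] E2; last by rewrite E2 eqxx in ja.
congr (h _); apply: val_inj.
have : val j = val (lift b j1) by rewrite -E1.
have : val j = val (lift a j2) by rewrite -E2.
have : val j != val a by [].
have : val j != val b by [].
rewrite !lift_valE /bump; move: va vb; rewrite /=.
move: (nat_of_ord j) (nat_of_ord j1) (nat_of_ord j2) (nat_of_ord k) (nat_of_ord a) (nat_of_ord b) => x y z w a' b' -> ->.
move=> h1 h2 e1 e2; move: e1 e2; case: leqP => ?; case: leqP => ? /= ? ?; lia.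
Qed.

Lemma good_rot n Phi (v : R -> R) (h : 'I_n -> R -> R) (k : 'I_n.+1) : good Phi ->
  Phi (ins k v h) = (-1) ^+ k * Phi (ins ord0 v h).
Proof.
move=> G; suff H : forall m (k : 'I_n.+1), val k = m -> Phi (ins k v h) = (-1) ^+ m * Phi (ins ord0 v h).
  exact: H.
elim=> [|m IH] k' Ek; clear k; rename k' into k.
  by rewrite expr0 mul1r; congr (Phi (ins _ _ _)); apply: val_inj.
have mn : (m < n)%N by rewrite -ltnS -Ek ltn_ord.
have -> : k = lift ord0 (Ordinal mn) by apply: val_inj.
rewrite ins_swap.
set a := lift ord_max (Ordinal mn); set b := lift ord0 (Ordinal mn).
have va : nat_of_ord a = m by rewrite /a lift_valE /bump leqNgt mn.
have Fb : ins a v h b = h (Ordinal mn).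
  have -> : b = lift a (Ordinal mn).
    by apply: val_inj; rewrite /= /bump /= (leqNgt n m) mn /= leqnn.
  by rewrite ins_lift.
have -> : upd (upd (ins a v h) a (h (Ordinal mn))) b v =
   upd (upd (ins a v h) a (ins a v h b)) b (ins a v h a) by rewrite Fb ins_k.
rewrite good_swap //; last first.
  by apply/eqP => /(congr1 val) => /=; rewrite /bump (leqNgt n m) mn /=; lia.
rewrite (IH a) //.
by rewrite exprS mulN1r mulNr.
Qed.

Definition ext n (g : R -> R) (f : 'I_n -> R -> R) : 'I_n.+1 -> R -> R :=
  ins ord_max g (fun j y => y * f j y).

Lemma ext_upd n g (f : 'I_n -> R -> R) k u :
  ext g (upd f k u) = upd (ext g f) (lift ord_max k) (fun y => y * u y).
Proof.
apply: functional_extensionality => j; rewrite /ext /upd.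
case: (unliftP ord_max j) => [j'|] ->.
  by rewrite (inj_eq (@lift_inj _ _)) !ins_lift; case: eqP.
by rewrite eq_liftF !ins_k.
Qed.

Lemma good_ext n g (Phi : ('I_n.+1 -> R -> R) -> R) : good Phi ->
  good (fun f => Phi (ext g f)).
Proof.
case=> L A; split.
  move=> f k c v w; rewrite !ext_upd.
  rewrite -L; congr (Phi (upd _ _ _)); apply: functional_extensionality => y.
  by rewrite mulrDr mulrCA.
move=> f i j ij fij; apply: (A _ (lift ord_max i) (lift ord_max j)).
  by rewrite (inj_eq (@lift_inj _ _)).
by rewrite /ext !ins_lift fij.
Qed.

End Abs.

Section Span.
Variable R : comRingType.

Definition Tm (n j : nat) (y : R) := y ^+ (n - j) * (1 + y ^+ 2) ^+ j.

Definition Sp (n : nat) := exists b : nat -> R, forall y : R,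
  (1 + y ^+ 2) ^+ n = 1 + y ^+ (2 * n) + \sum_(j < n) b j * Tm n j y.

Lemma Sp12 n : Sp n.+1 /\ Sp n.+2.
Proof.
elim: n => [|n [Sc Sb]].
  split.
    exists (fun _ => 0) => y; rewrite big1 => [|j _]; last by rewrite mul0r.
    by rewrite addr0 expr1 muln1.
  exists (fun j => if j == 0%N then 2 else 0) => y.
  rewrite !big_ord_recr big_ord0 /= /Tm /=; ring.
split=> //.
have [c Hc] := Sc; have [b Hb] := Sb.
pose N := n.+1.
exists (fun j => (if j is j'.+1 then b j' else 0) + (if j == N then 1 else 0)
   - (if (j < N)%N then c j else 0)) => y.
have P1 : \sum_(j < N.+2) (if (j : nat) is j'.+1 then b j' else 0) * Tm N.+2 j y
   = (1 + y ^+ 2) * \sum_(j < N.+1) b j * Tm N.+1 j y.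
  rewrite big_ord_recl mul0r add0r mulr_sumr; apply: eq_bigr => j _.
  rewrite /Tm /= subSS add0n (_ : bump 0 j = j.+1) // [(1 + _) ^+ j.+1]exprS; ring.
have P2 : \sum_(j < N.+2) (if (j : nat) == N then 1 else 0) * Tm N.+2 j y
   = y ^+ 2 * (1 + y ^+ 2) ^+ N.
  rewrite 2!big_ord_recr /= big1 => [|j _]; last first.
    rewrite (_ : (j : nat) == N = false) ?mul0r //; apply/negbTE; rewrite neq_ltn /= ltn_ord //.
  rewrite eqxx (_ : (N.+1 == N) = false); last by elim: (N).
  by rewrite /Tm add0r mul0r addr0 mul1r (_ : (N.+2 - N = 2)%N) //; lia.
have P3 : \sum_(j < N.+2) (if ((j : nat) < N)%N then c j else 0) * Tm N.+2 j y
   = y ^+ 2 * \sum_(j < N) c j * Tm N j y.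
  rewrite 2!big_ord_recr /= ltnn (_ : (N.+1 < N)%N = false); last by lia.
  rewrite !mul0r !addr0 mulr_sumr.
  apply: eq_bigr => j _; rewrite /Tm /= ltn_ord.
  have -> : (N.+2 - j = (N - j).+2)%N by have := ltn_ord j; lia.
  by rewrite !exprS; ring.
under eq_bigr => j _ do rewrite mulrBl mulrDl.
rewrite sumrB big_split /= P1 P2 P3.
have Hc' := Hc y; have Hb' := Hb y.
have E : \sum_(j < N) c j * Tm N j y = (1 + y ^+ 2) ^+ N - 1 - y ^+ (2 * N).
  by rewrite Hc'; ring.
rewrite E.
have E2 : \sum_(j < N.+1) b j * Tm N.+1 j y = (1 + y ^+ 2) ^+ N.+1 - 1 - y ^+ (2 * N.+1).
  by rewrite Hb'; ring.
rewrite E2.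
rewrite !mulnS !exprS !exprD; ring.
Qed.

Lemma span_step n : (0 < n)%N -> exists b : 'I_n -> R, forall y : R,
  (1 + y ^+ 2) ^+ n = 1 + y ^+ (2 * n)
     + \sum_(j < n) b j * (y * (y ^+ (n - 1 - j) * (1 + y ^+ 2) ^+ j)).
Proof.
case: n => // n _; have [[b Hb] _] := Sp12 n.
exists (fun j => b j) => y; rewrite Hb; congr (_ + _); apply: eq_bigr => j _.
rewrite /Tm [y * (_ * _)]mulrA -exprS; congr (_ * (_ ^+ _ * _)).
have := ltn_ord j; lia.
Qed.

End Span.

Section Main.
Variable R : comRingType.

Definition lcol n (lam : {ffun 'I_n -> 'I_n}) : 'I_n -> R -> R :=
  fun j y => y ^+ (lam (rev_ord j) + j).
Definition Ucol n : 'I_n -> R -> R :=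
  fun j y => y ^+ (n - 1 - j) * (1 + y ^+ 2) ^+ j.

Lemma padF_val p (mu : {ffun 'I_p.+1 -> 'I_p.+1}) k : (padF mu k : nat) = padf (fv mu) k.
Proof. exact: (congr1 (fun f => f k) (fv_padF mu)). Qed.
Lemma hookF_val p (mu : {ffun 'I_p.+1 -> 'I_p.+1}) k : (hookF mu k : nat) = hookf (fv mu) k.
Proof. exact: (congr1 (fun f => f k) (fv_hookF mu)). Qed.

Lemma lcol_pad p (mu : {ffun 'I_p.+1 -> 'I_p.+1}) :
  lcol (padF mu) = ins ord0 (fun y => 1) (fun j y => y * lcol mu j y).
Proof.
apply: functional_extensionality => j; apply: functional_extensionality => y.
rewrite /lcol; case: (unliftP ord0 j) => [j'|] ->.
  rewrite ins_lift padF_val /padf /=.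
  have h1 : (p.+1 - bump 0 j' < p.+1)%N by rewrite /bump /=; have := ltn_ord j'; lia.
  rewrite h1 /fv.
  have -> : (inord (p.+1 - bump 0 j') : 'I_p.+1) = rev_ord j'.
    by apply: val_inj => /=; rewrite inordK // /bump /=; lia.
  by rewrite -exprS /bump /= add1n addnS.
by rewrite ins_k padF_val /padf /= subn1 /= ltnn expr0.
Qed.

Lemma lcol_hook p (mu : {ffun 'I_p.+1 -> 'I_p.+1}) :
  lcol (hookF mu) = ext (fun y => y ^+ (2 * p.+1)) (lcol mu).
Proof.
apply: functional_extensionality => j; apply: functional_extensionality => y.
rewrite /lcol /ext; case: (unliftP ord_max j) => [j'|] ->.
  rewrite ins_lift hookF_val /hookf /=.
  have vj : bump p.+1 j' = j' by rewrite /bump leqNgt ltnS leq_ord.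
  rewrite vj (_ : (p.+1 - j' == 0)%N = false); last by have := ltn_ord j'; lia.
  rewrite /fv.
  have -> : (inord (p.+1 - j').-1 : 'I_p.+1) = rev_ord j'.
    by apply: val_inj => /=; rewrite inordK; have := ltn_ord j'; lia.
  by rewrite -exprS addSn.
by rewrite ins_k hookF_val /hookf /= subnn /=; congr (_ ^+ _); lia.
Qed.

Lemma sign_sq k : (-1) ^+ k * (-1) ^+ k = 1 :> R.
Proof. by rewrite -exprMn mulrNN mulr1 expr1n. Qed.

Lemma ext_add n (Phi : ('I_n.+1 -> R -> R) -> R) (f : 'I_n -> R -> R) v w :
  good Phi -> Phi (ext (fun y => v y + w y) f) = Phi (ext v f) + Phi (ext w f).
Proof.
move=> G; rewrite /ext (ins_upd _ _ v) good_add //.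
by rewrite -!ins_upd.
Qed.

Lemma good_sum n (Phi : ('I_n -> R -> R) -> R) f k (w : R -> R) I (s : seq I) b u :
  good Phi -> Phi (upd f k (fun y => w y + \sum_(j <- s) b j * u j y))
   = Phi (upd f k w) + \sum_(j <- s) b j * Phi (upd f k (u j)).
Proof.
move=> G; elim: s w => [|a s IH] w.
  rewrite big_nil addr0; congr (Phi (upd _ _ _)); apply: functional_extensionality => y.
  by rewrite big_nil addr0.
have [L _] := G.
rewrite big_cons.
have -> : (fun y => w y + \sum_(j <- a :: s) b j * u j y)
   = (fun y => b a * u a y + (w y + \sum_(j <- s) b j * u j y)).
  apply: functional_extensionality => y; rewrite big_cons; ring.
by rewrite L IH; ring.
Qed.

Lemma Ucol_ext p : @Ucol p.+2 = ext (fun y => (1 + y ^+ 2) ^+ p.+1) (@Ucol p.+1).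
Proof.
apply: functional_extensionality => j; apply: functional_extensionality => y.
rewrite /Ucol /ext; case: (unliftP ord_max j) => [j'|] ->.
  rewrite ins_lift /= /bump leqNgt ltnS leq_ord /= add0n mulrA -exprS.
  by congr (_ ^+ _ * _); case: j' => x hx /=; lia.
by rewrite ins_k /= subnn expr0 mul1r.
Qed.

Lemma Ucol_span p (Phi : ('I_p.+2 -> R -> R) -> R) : good Phi ->
  Phi (ext (fun y => 1 + y ^+ (2 * p.+1)) (@Ucol p.+1)) = Phi (@Ucol p.+2).
Proof.
move=> G; have [b Hb] := span_step R (ltn0Sn p).
symmetry; rewrite Ucol_ext.
have -> : (fun y => (1 + y ^+ 2) ^+ p.+1) =
   (fun y => (1 + y ^+ (2 * p.+1)) + \sum_(j < p.+1) b j * (y * Ucol j y)).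
  by apply: functional_extensionality => y; rewrite Hb.
rewrite /ext (ins_upd _ _ (fun y => 1 + y ^+ (2 * p.+1))).
have := (@good_sum _ _ _ _ (fun y => 1 + y ^+ (2 * p.+1)) _ (index_enum 'I_p.+1) b
   (fun j y => y * @Ucol p.+1 j y) G); cbv beta => ->.
rewrite -ins_upd big1 ?addr0 // => j _.
have [_ A] := G.
rewrite (A _ ord_max (lift ord_max j)) ?mulr0 //.
  exact: neq_lift.
by rewrite upd_eq upd_neq ?ins_lift // eq_sym neq_lift.
Qed.

End Main.

Section Main2.
Variable R : comRingType.

Lemma half_add_double a b : ((a + b.*2)./2 = a./2 + b)%N.
Proof. by rewrite halfD odd_double andbF add0n doubleK. Qed.

Theorem Ithm n (Phi : ('I_n -> R -> R) -> R) : good Phi ->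
  \sum_(lam : {ffun 'I_n -> 'I_n} | inP (fv lam))
     (-1) ^+ (psize (fv lam))./2 * Phi (lcol lam) = (-1) ^+ 'C(n, 2) * Phi (@Ucol R n).
Proof.
case: n Phi => [|n] Phi G.
  pose lam0 : {ffun 'I_0 -> 'I_0} := [ffun i => i].
  rewrite (eq_bigl (pred1 lam0)); last first.
    move=> lam /=; rewrite (_ : lam == lam0); last by apply/eqP/ffunP => -[].
    by apply/andP; split; apply/forallP => -[].
  rewrite big_pred1_eq /psize big_ord0 /= !expr0 !mul1r; congr Phi.
  by apply: functional_extensionality => -[].
elim: n Phi G => [|p IH] Phi G.
  pose lam0 : {ffun 'I_1 -> 'I_1} := [ffun i => ord0].
  rewrite (eq_bigl (pred1 lam0)); last first.
    move=> lam /=; rewrite (_ : lam == lam0); last by apply/eqP/ffunP => i; rewrite [lam _]ord1 [lam0 _]ord1.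
    have v0 : forall k, fv lam k = 0%N by move=> k; rewrite /fv; case: (lam k) => -[].
    apply/andP; split; apply/forallP => i; rewrite ?v0 //.
    by apply/forallP => j; rewrite v0 implybT.
  rewrite big_pred1_eq /psize big_ord1 /fv ffunE /= !expr0 !mul1r; congr Phi.
  apply: functional_extensionality => j; apply: functional_extensionality => y.
  by rewrite /lcol /Ucol ord1 (ord1 j) /= !expr0 mulr1.
rewrite split_sum.
pose g1 := fun y : R => 1; pose g2 := fun y : R => y ^+ (2 * p.+1).
have E : forall mu : {ffun 'I_p.+1 -> 'I_p.+1},
   (-1) ^+ (psize (fv (padF mu)))./2 * Phi (lcol (padF mu)) +
   (-1) ^+ (psize (fv (hookF mu)))./2 * Phi (lcol (hookF mu)) =
   (-1) ^+ p.+1 * ((-1) ^+ (psize (fv mu))./2 *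
      Phi (ext (fun y => 1 + y ^+ (2 * p.+1)) (lcol mu))).
  move=> mu.
  rewrite fv_padF fv_hookF psize_pad psize_hook half_add_double exprD.
  rewrite lcol_pad lcol_hook ext_add //.
  have R1 := good_rot (fun y => 1) (fun j y => y * lcol mu j y) ord_max G.
  have R2 : Phi (ins ord0 (fun=> 1) (fun j y => y * lcol mu j y)) =
     (-1) ^+ p.+1 * Phi (ext (fun=> 1) (lcol mu)).
    by rewrite /ext R1 mulrA sign_sq mul1r.
  rewrite R2; ring.
rewrite -big_split /= (eq_bigr _ (fun mu _ => E mu)) -mulr_sumr.
rewrite (IH (fun f => Phi (ext (fun y => 1 + y ^+ (2 * p.+1)) f))); last exact: good_ext.
rewrite Ucol_span // mulrA -exprD; congr (_ ^+ _ * _).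
by rewrite [in RHS]binS bin1 addnC.
Qed.

End Main2.

Section Conc.
Variable R : comRingType.

Definition PhiG N m (slot : 'I_N -> option 'I_m) (w x : 'I_N -> R) (Base : 'I_N -> 'I_N -> R)
  (f : 'I_m -> R -> R) : R :=
  \det (\matrix_(i, j) match slot j with Some s => w i * f s (x i) | None => Base i j end).

Lemma good_PhiG N m (slot : 'I_N -> option 'I_m) (col : 'I_m -> 'I_N) w x Base :
  (forall s, slot (col s) = Some s) ->
  (forall j s, slot j = Some s -> j = col s) ->
  good (PhiG slot w x Base).
Proof.
move=> Hc Hs; split.
  move=> f k c v u; rewrite /PhiG -[X in _ + X]mul1r.
  set M1 := \matrix_(_, _) _; set M2 := \matrix_(_, _) _; set M3 := \matrix_(_, _) _.
  rewrite -(det_tr M1) -(det_tr M2) -(det_tr M3).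
  apply: (@determinant_multilinear _ _ _ _ _ (col k) c 1).
  - apply/rowP => i; rewrite !mxE Hc upd_eq !upd_eq; ring.
  - apply/matrixP => r i; rewrite !mxE.
    case E: (slot (lift (col k) r)) => [s|] //.
    rewrite !upd_neq //; apply/eqP => sk; move: E; rewrite sk => /Hs E;
    by have := neq_lift (col k) r; rewrite E eqxx.
  - apply/matrixP => r i; rewrite !mxE.
    case E: (slot (lift (col k) r)) => [s|] //.
    rewrite !upd_neq //; apply/eqP => sk; move: E; rewrite sk => /Hs E;
    by have := neq_lift (col k) r; rewrite E eqxx.
move=> f i j ij fij; rewrite /PhiG -det_tr.
apply: (@determinant_alternate _ _ _ (col i) (col j)).
  apply/eqP => /(congr1 slot); rewrite !Hc => -[E]; by rewrite E eqxx in ij.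
by move=> r; rewrite !mxE !Hc fij.
Qed.

End Conc.

Section Fin.
Variable R : comRingType.
Variables (p q : nat) (x a : 'I_(p + q) -> R).

Definition slotL (j : 'I_(p + q)) : option 'I_p :=
  match split j with inl j' => Some j' | inr _ => None end.
Definition slotR (j : 'I_(p + q)) : option 'I_q :=
  match split j with inr k => Some k | inl _ => None end.

Lemma goodL w Base : good (PhiG slotL w x Base).
Proof.
apply: (good_PhiG (col := lshift q)).
  by move=> s; rewrite /slotL (unsplitK (inl _ s)).
by move=> j s; rewrite /slotL; case: split_ordP => [j' ->|k ->] // [->].
Qed.

Lemma goodR w Base : good (PhiG slotR w x Base).
Proof.
apply: (good_PhiG (col := fun k : 'I_q => rshift p k)).
  by move=> s; rewrite /slotR (unsplitK (inr _ s)).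
by move=> j s; rewrite /slotR; case: split_ordP => [j' ->|k ->] // [->].
Qed.

Definition BaseL (mu : {ffun 'I_q -> 'I_q}) (i j : 'I_(p + q)) : R :=
  match split j with inr k => a i * x i ^+ (mu (rev_ord k) + k) | inl _ => 0 end.
Definition BaseR (i j : 'I_(p + q)) : R :=
  match split j with inl j' => @Ucol R p j' (x i) | inr _ => 0 end.

Lemma V_PhiL lam mu : \det (Vmat (fv lam) (fv mu) x a) = PhiG slotL (fun=> 1) x (BaseL mu) (lcol lam).
Proof.
rewrite /PhiG; congr (\det _); apply/matrixP => i j; rewrite !mxE /slotL /BaseL.
by case: (split j) => [j'|k] //=; rewrite mul1r.
Qed.

Lemma PhiL_R mu : PhiG slotL (fun=> 1) x (BaseL mu) (@Ucol R p) = PhiG slotR a x BaseR (lcol mu).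
Proof.
rewrite /PhiG; congr (\det _); apply/matrixP => i j; rewrite !mxE /slotL /slotR /BaseL /BaseR.
by case: (split j) => [j'|k] //=; rewrite mul1r.
Qed.

Lemma PhiR_U : PhiG slotR a x BaseR (@Ucol R q) = \det (Umat x a).
Proof.
rewrite /PhiG; congr (\det _); apply/matrixP => i j; rewrite !mxE /slotR /BaseR.
by case: (split j) => [j'|k] //=; rewrite /Ucol mulrA.
Qed.

Lemma Ffun_U : Ffun x a = (-1) ^+ ('C(p, 2) + 'C(q, 2)) * \det (Umat x a).
Proof.
rewrite /Ffun.
transitivity (\sum_(lam : {ffun 'I_p -> 'I_p} | inP (fv lam))
   \sum_(mu : {ffun 'I_q -> 'I_q} | inP (fv mu))
   (-1) ^+ (psize (fv mu))./2 * ((-1) ^+ (psize (fv lam))./2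
      * PhiG slotL (fun=> 1) x (BaseL mu) (lcol lam))).
  apply: eq_bigr => lam Hl; apply: eq_bigr => mu Hm.
  rewrite -(V_PhiL lam mu) mulrA -exprD; congr (_ ^+ _ * _).
  change ((psize (fv lam) + psize (fv mu))./2 = (psize (fv mu))./2 + (psize (fv lam))./2)%N.
  have He : ~~ odd (psize (fv lam)) := inP_even Hl.
  by rewrite halfD (negPf He) add0n addnC.
rewrite exchange_big /=.
under eq_bigr => mu _ do rewrite -mulr_sumr (Ithm (goodL _ _)) PhiL_R mulrCA.
rewrite -mulr_sumr (Ithm (goodR _ _)) PhiR_U mulrA -exprD addnC.
by [].
Qed.

End Fin.

Lemma U_V0 (R : fieldType) (p q : nat) (x a : 'I_(p + q) -> R) (hx : forall i, x i != 0) :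
  (\prod_i x i ^ (p%:Z - 1)) *
    \det (V0 (fun i => x i + (x i)^-1) (fun i => a i * x i ^ (q%:Z - p%:Z)))
  = \det (Umat x a).
Proof.
have -> : Umat x a = diag_mx (\row_i x i ^ (p%:Z - 1)) *m
   V0 (fun i => x i + (x i)^-1) (fun i => a i * x i ^ (q%:Z - p%:Z)).
  rewrite mul_diag_mx; apply/matrixP => i j; rewrite !mxE.
  have hy := hx i; move: (x i) hy => y hy.
  case: (split j) => [j'|k] /=.
    have E : (p%:Z - 1 = (p - 1 - j')%N%:Z + j'%:Z)%R by have := ltn_ord j'; lia.
    rewrite E expfzDr // -!exprnP -mulrA -exprMn mulrDr mulfV //.
    by congr (_ * _ ^+ _); rewrite addrC expr2.
  have E : (p%:Z - 1 + (q%:Z - p%:Z) = (q - 1 - k)%N%:Z + k%:Z)%R by have := ltn_ord k; lia.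
  transitivity (a i * (y ^ (p%:Z - 1) * y ^ (q%:Z - p%:Z)) * (y + y^-1) ^+ k); last by ring.
  rewrite -expfzDr // E expfzDr // -!exprnP -!mulrA -exprMn mulrDr mulfV //.
  by congr (_ * (_ * _ ^+ _)); rewrite addrC expr2.
rewrite det_mulmx det_diag; congr (_ * _); apply: eq_bigr => i _; by rewrite mxE.
Qed.

Unset Implicit Arguments.

Theorem mainTheorem5 (R : fieldType) (p q : nat) (x a : 'I_(p + q) -> R)
  (hx : forall i, x i != 0) :
  Ffun x a =
    (-1) ^+ ('C(p, 2) + 'C(q, 2))%N * (\prod_i x i ^ (p%:Z - 1))
      * \det (V0 (fun i => x i + (x i)^-1) (fun i => a i * x i ^ (q%:Z - p%:Z)))
  /\ Ffun x a = (-1) ^+ ('C(p, 2) + 'C(q, 2))%N * \det (Umat x a).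
Proof.
split; last exact: Ffun_U.
by rewrite Ffun_U -(U_V0 a hx) mulrA.
Qed.
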